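(* Let $\mu\in[0,1]$ and $c\ge -H(L_1)$. At every point of the collision set $\{(z,w)\in\Sigma_{\mu,c}: z=0\}$ the tangential Hessian $THess$ of $K_{\mu,c}$ is positive definite.
   Context: Restricted three-body problem: $H(q,p)=\tfrac12|p|^2+q_1p_2-q_2p_1-\frac{1-\mu}{|q+(\mu,0)|}-\frac{\mu}{|q-(1-\mu,0)|}$, $H(L_1)$ its smallest critical value. Levi-Civita Hamiltonian on $\mathbb{R}^4$ with coordinates ordered $(z_1,z_2,w_1,w_2)$ (complex notation $z=z_1+iz_2$): $K_{\mu,c}=\tfrac12|w|^2+c|z|^2-\tfrac{1-\mu}{2}+2|z|^2(z_1w_2-z_2w_1)-\mu(z_1w_2+z_2w_1)-\frac{\mu|z|^2}{|2z^2-1|}$; $\Sigma_{\mu,c}$ is the compact component of $K_{\mu,c}^{-1}(0)$ containing $\{z=0\}$. With $\mathbf I=\begin{pmatrix}0&0&1&0\\0&0&0&1\\-1&0&0&0\\0&-1&0&0\end{pmatrix}$, $\mathbf J=\begin{pmatrix}0&1&0&0\\-1&0&0&0\\0&0&0&-1\\0&0&1&0\end{pmatrix}$, $\mathbf K=\begin{pmatrix}0&0&0&-1\\0&0&1&0\\0&-1&0&0\\1&0&0&0\end{pmatrix}$, let $v_1=\mathbf I\nabla K_{\mu,c}$, $v_2=\mathbf J\nabla K_{\mu,c}$, $v_3=\mathbf K\nabla K_{\mu,c}$ (a frame of $T\Sigma_{\mu,c}$). The tangential Hessian is the $3\times3$ matrix $THess_{ij}=v_i^T\,\mathrm{Hess}(K_{\mu,c})\,v_j$.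 *)

(* Defs.v *)
From HB Require Import structures.
From mathcomp Require Import all_boot all_order all_algebra.
From mathcomp Require Import all_classical all_reals all_analysis.
Set Implicit Arguments. Unset Strict Implicit. Unset Printing Implicit Defensive.
Import Order.TTheory GRing.Theory Num.Theory.
Import numFieldNormedType.Exports.
Local Open Scope classical_set_scope.
Local Open Scope ring_scope.

Section Defs.
Variable R : realType.

Definition co (x : 'cV[R]_4) (k : nat) : R := x (inord k) 0.

Definition e4 (k : 'I_4) : 'cV[R]_4 := delta_mx k 0.

Definition pd (f : 'cV[R]_4 -> R) (k : 'I_4) (x : 'cV[R]_4) : R := 'D_(e4 k) f x.

Definition grad (f : 'cV[R]_4 -> R) (x : 'cV[R]_4) : 'cV[R]_4 :=
  \col_k pd f k x.
Definition hess (f : 'cV[R]_4 -> R) (x : 'cV[R]_4) : 'M[R]_4 :=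
  \matrix_(i, j) pd (pd f j) i x.

Definition H3b (mu : R) (x : 'cV[R]_4) : R :=
  let q1 := co x 0 in let q2 := co x 1 in let p1 := co x 2 in let p2 := co x 3 in
  (p1 ^+ 2 + p2 ^+ 2) / 2 + (q1 * p2 - q2 * p1)
  - (1 - mu) / Num.sqrt ((q1 + mu) ^+ 2 + q2 ^+ 2)
  - mu / Num.sqrt ((q1 - (1 - mu)) ^+ 2 + q2 ^+ 2).

Definition H3b_dom (mu : R) : set 'cV[R]_4 :=
  [set x | (co x 0, co x 1) != (- mu, 0) /\ (co x 0, co x 1) != (1 - mu, 0)].

Definition H3b_crit (mu : R) : set 'cV[R]_4 :=
  [set x | H3b_dom mu x /\ differentiable (H3b mu) x /\ grad (H3b mu) x = 0].

(* H(L_1): the smallest critical value of H *)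
Definition HL1 (mu : R) : R := inf [set H3b mu x | x in H3b_crit mu].

(* Levi-Civita Hamiltonian, coordinates (z1,z2,w1,w2);
   |2 z^2 - 1| with z = z1 + i z2 written out as a complex modulus *)
Definition absz2 (x : 'cV[R]_4) : R := co x 0 ^+ 2 + co x 1 ^+ 2.
Definition mod2z2m1 (x : 'cV[R]_4) : R :=
  let z1 := co x 0 in let z2 := co x 1 in
  Num.sqrt ((2 * (z1 ^+ 2 - z2 ^+ 2) - 1) ^+ 2 + (4 * z1 * z2) ^+ 2).

Definition KLC (mu c : R) (x : 'cV[R]_4) : R :=
  let z1 := co x 0 in let z2 := co x 1 in let w1 := co x 2 in let w2 := co x 3 in
  (w1 ^+ 2 + w2 ^+ 2) / 2 + c * absz2 x - (1 - mu) / 2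
  + 2 * absz2 x * (z1 * w2 - z2 * w1)
  - mu * (z1 * w2 + z2 * w1)
  - mu * absz2 x / mod2z2m1 x.

Definition Klevel0 (mu c : R) : set 'cV[R]_4 :=
  [set x | mod2z2m1 x != 0 /\ KLC mu c x = 0].

Definition Sigma (mu c : R) : set 'cV[R]_4 :=
  [set x | exists2 y, (Klevel0 mu c y /\ co y 0 = 0 /\ co y 1 = 0)
                    & connected_component (Klevel0 mu c) y x].

Definition matI : 'M[R]_4 := \matrix_(i < 4, j < 4)
  (nth [::] [:: [:: 0; 0; 1; 0]; [:: 0; 0; 0; 1]; [:: -1; 0; 0; 0]; [:: 0; -1; 0; 0]] i)`_j.
Definition matJ : 'M[R]_4 := \matrix_(i < 4, j < 4)
  (nth [::] [:: [:: 0; 1; 0; 0]; [:: -1; 0; 0; 0]; [:: 0; 0; 0; -1]; [:: 0; 0; 1; 0]] i)`_j.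
Definition matK : 'M[R]_4 := \matrix_(i < 4, j < 4)
  (nth [::] [:: [:: 0; 0; 0; -1]; [:: 0; 0; 1; 0]; [:: 0; -1; 0; 0]; [:: 1; 0; 0; 0]] i)`_j.

Definition quatmat (k : 'I_3) : 'M[R]_4 :=
  if val k == 0%N then matI else if val k == 1%N then matJ else matK.

Definition vframe (mu c : R) (x : 'cV[R]_4) (k : 'I_3) : 'cV[R]_4 :=
  quatmat k *m grad (KLC mu c) x.
Definition THess (mu c : R) (x : 'cV[R]_4) : 'M[R]_3 :=
  \matrix_(i, j) ((vframe mu c x i)^T *m hess (KLC mu c) x *m vframe mu c x j) 0 0.

Definition posdef n (A : 'M[R]_n) : Prop :=
  forall u : 'cV[R]_n, u != 0 -> 0 < (u^T *m A *m u) 0 0.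

End Defs.

(* Main.v *)
Require Import Defs.
From HB Require Import structures.
From mathcomp Require Import all_boot all_order all_algebra.
From mathcomp Require Import all_classical all_reals all_analysis.
From mathcomp Require Import ring lra.
Import Order.TTheory GRing.Theory Num.Theory.
Import numFieldNormedType.Exports.
Set Implicit Arguments. Unset Strict Implicit. Unset Printing Implicit Defensive.
Local Open Scope classical_set_scope.
Local Open Scope ring_scope.

Section W.
Variable R : realType.
Local Notation V := 'cV[R]_4.
Implicit Types (f g : V -> R) (x v : V).

Lemma isdC x v (k : R) : is_derive x v (fun _ => k) 0.
Proof. exact: is_derive_cst. Qed.

Lemma isdD f g x v df dg : is_derive x v f df -> is_derive x v g dg ->
  is_derive x v (fun y => f y + g y) (df + dg).
Proof. move=> ? ?; exact: is_deriveD. Qed.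

Lemma isdB f g x v df dg : is_derive x v f df -> is_derive x v g dg ->
  is_derive x v (fun y => f y - g y) (df - dg).
Proof. move=> ? ?; exact: is_deriveB. Qed.

Lemma isdN f x v df : is_derive x v f df ->
  is_derive x v (fun y => - f y) (- df).
Proof. move=> ?; exact: is_deriveN. Qed.

Lemma isdM f g x v df dg : is_derive x v f df -> is_derive x v g dg ->
  is_derive x v (fun y => f y * g y) (f x * dg + g x * df).
Proof. move=> ? ?; exact: is_deriveM. Qed.

Lemma isdX2 f x v df : is_derive x v f df ->
  is_derive x v (fun y => f y ^+ 2) (2 * f x * df).
Proof. move=> H.
rewrite (_ : (fun y => f y ^+ 2) = (fun y => f y * f y)); last first.
  by apply/funext => y; rewrite expr2.
have K := isdM H H. apply: (is_derive_eq K).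
by rewrite /GRing.scale /=; ring. Qed.

Lemma isdV f x v df : f x != 0 -> is_derive x v f df ->
  is_derive x v (fun y => (f y)^-1) (- df / (f x) ^+ 2).
Proof. move=> fx0 H; have dH := @ex_derive _ _ _ _ _ _ _ H. apply: DeriveDef.
  exact: derivableV.
rewrite deriveV // derive_val.
by rewrite /GRing.scale /= mulrC mulrN mulNr.
Qed.

Lemma isdco x v (k : nat) : is_derive x v (fun y => co y k) (co v k).
Proof.
have C : (fun h : R => h^-1 *: (((fun y => co y k) \o shift x) (h *: v) - co x k))
   @ 0^' --> co v k.
  apply: cvg_near_cst; near=> h.
  have hn0 : h != 0 by near: h; exact: nbhs_dnbhs_neq.
  rewrite /= /co !mxE /GRing.scale /=. field. exact: hn0.
apply: DeriveDef; first by apply/cvg_ex; exists (co v k).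
exact: cvg_lim C.
Unshelve. all: by end_near.
Qed.

Lemma deriveLine (F : V -> R) x v :
  'D_v F x = 'D_1 (fun h : R => F (h *: v + x)) 0.
Proof.
rewrite /derive.
have -> : (fun h : R => h^-1 *: ((F \o shift x) (h *: v) - F x)) =
  (fun h : R => h^-1 *: (((fun h0 : R => F (h0 *: v + x)) \o shift 0) (h *: 1)
     - F (0 *: v + x))).
  by apply/funext => h /=; rewrite addr0 scale0r add0r [_%:A]mulr1.
by [].
Qed.

Lemma isdsqrt f x v df : 0 < f x -> is_derive x v f df ->
  is_derive x v (fun y => Num.sqrt (f y)) (df / (2 * Num.sqrt (f x))).
Proof.
move=> fx0 H; have dH := @ex_derive _ _ _ _ _ _ _ H.
have vH := @derive_val _ _ _ _ _ _ _ H.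
set phi := fun h : R => f (h *: v + x).
have dphi : derivable phi 0 1 by exact: (proj1 (derivable1P f x v) dH).
have phi0 : phi 0 = f x by rewrite /phi scale0r add0r.
have dsq : derivable (@Num.sqrt R) (phi 0) 1.
  rewrite phi0; exact: (@ex_derive _ _ _ _ _ _ _ (is_derive1_sqrt fx0)).
have dcomp : derivable (Num.sqrt \o phi) 0 1.
  apply/derivable1_diffP; apply: differentiable_comp; exact/derivable1_diffP.
apply: DeriveDef.
  exact: (proj2 (derivable1P _ x v) dcomp).
rewrite deriveLine.
rewrite -[fun h : R => _]/(Num.sqrt \o phi).
rewrite -derive1E derive1_comp // !derive1E /phi -deriveLine vH scale0r add0r.
by rewrite derive_sqrt // mulrC.
Qed.



Lemma isdX f x v df (n : nat) : is_derive x v f df ->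
  is_derive x v (fun y => f y ^+ n) (n%:R * f x ^+ n.-1 * df).
Proof. move=> H; have K := is_deriveX n H.
have -> : (fun y => f y ^+ n) = f ^+ n.
  apply/funext => y; elim: n {K} => [|n IH]; first by rewrite !expr0.
  by rewrite !exprS IH.
apply: (is_derive_eq K); by rewrite /GRing.scale /=.
Qed.


Lemma dfC x (k : R) : differentiable (fun _ : V => k) x.
Proof. exact: differentiable_cst. Qed.
Lemma dfco x (k : nat) : differentiable (fun y : V => co y k) x.
Proof. exact: differentiable_coord. Qed.
Lemma dfD f g x : differentiable f x -> differentiable g x ->
  differentiable (fun y => f y + g y) x.
Proof. move=> ? ?; exact: differentiableD. Qed.
Lemma dfB f g x : differentiable f x -> differentiable g x ->
  differentiable (fun y => f y - g y) x.
Proof. move=> ? ?; exact: differentiableB. Qed.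
Lemma dfN f x : differentiable f x -> differentiable (fun y => - f y) x.
Proof. move=> ?; exact: differentiableN. Qed.
Lemma dfM f g x : differentiable f x -> differentiable g x ->
  differentiable (fun y => f y * g y) x.
Proof. move=> ? ?; exact: differentiableM. Qed.
Lemma dfX2 f x : differentiable f x -> differentiable (fun y => f y ^+ 2) x.
Proof. move=> H; rewrite (_ : (fun y => f y ^+ 2) = (fun y => f y * f y)).
  exact: dfM. by apply/funext => y; rewrite expr2. Qed.
Lemma dfV f x : f x != 0 -> differentiable f x -> differentiable (fun y => (f y)^-1) x.
Proof. move=> ? ?; exact: differentiableV. Qed.
Lemma dfsqrt f x : 0 < f x -> differentiable f x -> differentiable (fun y => Num.sqrt (f y)) x.
Proof. move=> fx H.
have : differentiable (@Num.sqrt R) (f x).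
  apply/derivable1_diffP; exact: (@ex_derive _ _ _ _ _ _ _ (is_derive1_sqrt fx)).
move=> Hs; exact: (differentiable_comp H Hs).
Qed.
End W.


Ltac dtac := repeat first [ apply: isdC | apply: isdco | apply: isdX2 | apply: isdD
  | apply: isdB | apply: isdN | apply: isdM | apply: isdsqrt | apply: isdV ].

Section K.
Variable R : realType.
Local Notation V := 'cV[R]_4.
Variables mu c : R.

Definition Sf (y : V) := co y 0 ^+ 2 + co y 1 ^+ 2.
Definition Qf (y : V) := (2 * (co y 0 ^+ 2 - co y 1 ^+ 2) - 1) ^+ 2 + (4 * co y 0 * co y 1) ^+ 2.
Definition mf (y : V) := Num.sqrt (Qf y).
Definition dSf (y v : V) := 2 * co y 0 * co v 0 + 2 * co y 1 * co v 1.
Definition dQf (y v : V) := 2 * (2 * (co y 0 ^+ 2 - co y 1 ^+ 2) - 1) * (4 * co y 0 * co v 0 - 4 * co y 1 * co v 1)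
  + 2 * (4 * co y 0 * co y 1) * (4 * co v 0 * co y 1 + 4 * co y 0 * co v 1).

Definition KLC' (y : V) := (co y 2 ^+ 2 + co y 3 ^+ 2) / 2 + c * Sf y - (1 - mu) / 2
  + 2 * Sf y * (co y 0 * co y 3 - co y 1 * co y 2)
  - mu * (co y 0 * co y 3 + co y 1 * co y 2) - mu * Sf y / mf y.

Lemma KLCE : KLC mu c = KLC'.
Proof. by []. Qed.

Definition DK (y v : V) := co y 2 * co v 2 + co y 3 * co v 3 + c * dSf y v
  + 2 * dSf y v * (co y 0 * co y 3 - co y 1 * co y 2)
  + 2 * Sf y * (co v 0 * co y 3 + co y 0 * co v 3 - co v 1 * co y 2 - co y 1 * co v 2)
  - mu * (co v 0 * co y 3 + co y 0 * co v 3 + co v 1 * co y 2 + co y 1 * co v 2)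
  - mu * (dSf y v / mf y - Sf y * dQf y v / (2 * mf y ^+ 3)).

Lemma isdSf y v : is_derive y v Sf (dSf y v).
Proof. rewrite /Sf. apply: is_derive_eq. dtac. rewrite /dSf. ring. Qed.

Lemma isdQf y v : is_derive y v Qf (dQf y v).
Proof. rewrite /Qf. apply: is_derive_eq. dtac. rewrite /dQf. ring. Qed.

Lemma isdmf y v : 0 < Qf y -> is_derive y v mf (dQf y v / (2 * mf y)).
Proof. move=> H; rewrite /mf. apply: isdsqrt => //; exact: isdQf. Qed.

Lemma dKLC y v : 0 < Qf y -> is_derive y v (KLC mu c) (DK y v).
Proof.
move=> H; have m0 : mf y != 0 by rewrite /mf gt_eqF // sqrtr_gt0.
rewrite KLCE /KLC'.
apply: is_derive_eq.
  repeat first [ apply: isdC | apply: isdco | apply: isdX2 | apply: isdSf | apply: isdD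
  | apply: isdB | apply: isdN | apply: isdM | (apply: isdV; [exact: m0|]) | exact: isdmf ].
rewrite /DK. field. exact: m0.
Qed.

Definition D2 (u v : V) := co u 2 * co v 2 + co u 3 * co v 3
  + 2 * (c - mu) * (co u 0 * co v 0 + co u 1 * co v 1)
  - mu * (co u 0 * co v 3 + co v 0 * co u 3 + co u 1 * co v 2 + co v 1 * co u 2).

Lemma Qf0 x : co x 0 = 0 -> co x 1 = 0 -> Qf x = 1.
Proof. by move=> h0 h1; rewrite /Qf h0 h1; ring. Qed.
Lemma mf0 x : co x 0 = 0 -> co x 1 = 0 -> mf x = 1.
Proof. by move=> h0 h1; rewrite /mf Qf0 // sqrtr1. Qed.
Lemma Sf0 x : co x 0 = 0 -> co x 1 = 0 -> Sf x = 0.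
Proof. by move=> h0 h1; rewrite /Sf h0 h1; ring. Qed.

Lemma d2KLC x u v : co x 0 = 0 -> co x 1 = 0 ->
  is_derive x u (fun y => DK y v) (D2 u v).
Proof.
move=> h0 h1; have Q1 := Qf0 h0 h1; have m1 := mf0 h0 h1; have S0 := Sf0 h0 h1.
have Qp : 0 < Qf x by rewrite Q1.
have m0 : mf x != 0 by rewrite m1 oner_eq0.
have m3 : 2 * mf x ^+ 3 != 0 by rewrite m1 expr1n mulr1 pnatr_eq0.
rewrite /DK /dSf /dQf.
apply: is_derive_eq.
  repeat first [ apply: isdC | apply: isdco | apply: isdX2 | apply: isdSf | apply: isdD
  | apply: isdB | apply: isdN | apply: isdM | (apply: isdV; [first [exact: m0 | exact: m3]|]) | exact: isdmf
  | apply: isdX ].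
rewrite /D2 /dSf m1 S0 h0 h1. by field.
Qed.

Lemma nearQ x : 0 < Qf x -> \forall y \near x, 0 < Qf y.
Proof.
move=> Qp; have D : differentiable Qf x.
  rewrite /Qf; repeat first [apply: dfC|apply: dfco|apply: dfX2|apply: dfD|apply: dfB|apply: dfN|apply: dfM].
exact: (cvgr_gt _ (differentiable_continuous D) _ Qp).
Qed.

Lemma gradK x j : 0 < Qf x -> pd (KLC mu c) j x = DK x (e4 R j).
Proof. by move=> Qp; rewrite /pd; apply: derive_val; apply: dKLC. Qed.

Lemma hessK x i j : co x 0 = 0 -> co x 1 = 0 ->
  pd (pd (KLC mu c) j) i x = D2 (e4 R i) (e4 R j).
Proof.
move=> h0 h1; have Qp : 0 < Qf x by rewrite Qf0.
rewrite /pd; apply: derive_val.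
apply: (near_eq_is_derive _ (d2KLC _ _ h0 h1)).
apply: filterS (nearQ Qp) => y Hy /=.
by symmetry; apply: derive_val; apply: dKLC.
Qed.
End K.


Section Alg.
Variable R : realType.
Local Notation V := 'cV[R]_4.

Lemma sum4 (F : 'I_4 -> R) : \sum_(i < 4) F i =
  F (inord 0) + F (inord 1) + F (inord 2) + F (inord 3).
Proof.
rewrite !big_ord_recr big_ord0 /= add0r.
by congr (F _ + F _ + F _ + F _); apply: val_inj; rewrite /= inordK.
Qed.

Lemma sum3 (F : 'I_3 -> R) : \sum_(i < 3) F i =
  F (inord 0) + F (inord 1) + F (inord 2).
Proof.
rewrite !big_ord_recr big_ord0 /= add0r.
by congr (F _ + F _ + F _); apply: val_inj; rewrite /= inordK.
Qed.

Lemma co_e4 (i k : nat) : (i < 4)%N -> (k < 4)%N ->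
  co (e4 R (inord i)) k = (k == i)%:R.
Proof.
move=> hi hk; rewrite /co /e4 mxE eqxx andbT.
by rewrite -val_eqE /= !inordK.
Qed.

Lemma D2form mu c (a b : V) :
  (a^T *m (\matrix_(i, j) D2 mu c (e4 R i) (e4 R j)) *m b) 0 0 = D2 mu c a b.
Proof.
rewrite !mxE !sum4 !mxE !sum4 !mxE /D2 !co_e4 //=.
rewrite /co; ring.
Qed.


Definition VV (mu : R) (x : V) : seq (seq R) :=
  [:: [:: co x 2; co x 3; mu * co x 3; mu * co x 2];
      [:: - mu * co x 2; mu * co x 3; - co x 3; co x 2];
      [:: - co x 3; co x 2; mu * co x 2; - mu * co x 3]].

Lemma vframeE mu c x (a k : nat) : co x 0 = 0 -> co x 1 = 0 -> (a < 3)%N -> (k < 4)%N ->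
  co (vframe mu c x (inord a)) k = nth 0 (nth [::] (VV mu x) a) k.
Proof.
move=> h0 h1 ha hk.
have Qp : 0 < Qf x by rewrite Qf0.
rewrite /vframe /co mxE sum4 /grad !mxE !gradK //.
rewrite /DK /dSf /dQf (Sf0 h0 h1) (mf0 h0 h1) -/(co x 0) -/(co x 1) h0 h1 !co_e4 //.
have E : val (inord a : 'I_3) = a by exact: inordK.
rewrite /quatmat E; clear E.
case: a ha => [|[|[|]]] // _; case: k hk => [|[|[|[|]]]] // _; rewrite /= !mxE /= !inordK //=; ring.
Qed.

Lemma hessE mu c x : co x 0 = 0 -> co x 1 = 0 ->
  hess (KLC mu c) x = \matrix_(i, j) D2 mu c (e4 R i) (e4 R j).
Proof. move=> h0 h1; apply/matrixP => i j; rewrite !mxE; exact: hessK. Qed.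

Lemma THessE mu c (x : V) i j : co x 0 = 0 -> co x 1 = 0 ->
  THess mu c x i j = D2 mu c (vframe mu c x i) (vframe mu c x j).
Proof. move=> h0 h1; rewrite /THess mxE (hessE _ _ h0 h1) D2form //. Qed.

Lemma THess_form mu c x (u : 'cV[R]_3) : co x 0 = 0 -> co x 1 = 0 ->
  let p := co x 2 in let q := co x 3 in
  let u0 := u (inord 0) 0 in let u1 := u (inord 1) 0 in let u2 := u (inord 2) 0 in
  let s := p ^+ 2 + q ^+ 2 in let A := 2 * (c - mu) - mu ^+ 2 in
  (u^T *m THess mu c x *m u) 0 0 =
    s * A * u0 ^+ 2 + s * A * u2 ^+ 2 + s * (mu ^+ 2 * A + (1 + mu ^+ 2) ^+ 2) * u1 ^+ 2
    - 2 * mu * A * (p ^+ 2 - q ^+ 2) * u0 * u1 + 4 * mu * A * p * q * u1 * u2.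
Proof.
move=> h0 h1 /=.
rewrite !mxE !sum3 !mxE !sum3 !THessE // /D2 !vframeE //= !mxE.
ring.
Qed.
End Alg.


Section Key.
Variable R : realType.

Lemma key (mu A p q u0 u1 u2 : R) : 0 < p ^+ 2 + q ^+ 2 -> 0 < A ->
  (u0 != 0) || (u1 != 0) || (u2 != 0) ->
  0 < (p ^+ 2 + q ^+ 2) * A * u0 ^+ 2 + (p ^+ 2 + q ^+ 2) * A * u2 ^+ 2 + (p ^+ 2 + q ^+ 2) * (mu ^+ 2 * A + (1 + mu ^+ 2) ^+ 2) * u1 ^+ 2
    - 2 * mu * A * (p ^+ 2 - q ^+ 2) * u0 * u1 + 4 * mu * A * p * q * u1 * u2.
Proof.
move=> sp Ap nz; set s := p ^+ 2 + q ^+ 2.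
set F := (X in 0 < X).
have E : s * F = A * ((s * u0 - mu * (p ^+ 2 - q ^+ 2) * u1) ^+ 2
   + (s * u2 + 2 * mu * p * q * u1) ^+ 2) + s ^+ 2 * (1 + mu ^+ 2) ^+ 2 * u1 ^+ 2.
  rewrite /F /s; ring.
suff : 0 < s * F by rewrite pmulr_rgt0.
rewrite E.
have [u10|u1n0] := eqVneq u1 0.
  rewrite u10 in nz *; rewrite !(mulr0, mul0r, subr0, addr0, expr0n) /=.
  have H2 : (u0 != 0) || (u2 != 0) by move: nz; rewrite eqxx /= orbF.
  apply: mulr_gt0 => //.
  have a0 := sqr_ge0 (s * u0); have a2 := sqr_ge0 (s * u2).
  have s0 : s != 0 by rewrite gt_eqF.
  case/orP: H2 => h.
    have : 0 < (s * u0) ^+ 2 by rewrite lt0r sqrf_eq0 mulf_neq0 //= sqr_ge0.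
    lra.
  have : 0 < (s * u2) ^+ 2 by rewrite lt0r sqrf_eq0 mulf_neq0 //= sqr_ge0.
  lra.
have t1 : 0 <= A * ((s * u0 - mu * (p ^+ 2 - q ^+ 2) * u1) ^+ 2 +
     (s * u2 + 2 * mu * p * q * u1) ^+ 2).
  by apply: mulr_ge0; [exact: ltW| apply: addr_ge0; exact: sqr_ge0].
have t2 : 0 < s ^+ 2 * (1 + mu ^+ 2) ^+ 2 * u1 ^+ 2.
  apply: mulr_gt0; last by rewrite lt0r sqrf_eq0 u1n0 sqr_ge0.
  apply: mulr_gt0; first by rewrite exprn_gt0.
  apply: exprn_gt0; have := sqr_ge0 mu; lra.
lra.
Qed.
End Key.



Section H.
Variable R : realType.
Local Notation V := 'cV[R]_4.
Variable mu : R.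

Definition r1sq (y : V) := (co y 0 + mu) ^+ 2 + co y 1 ^+ 2.
Definition r2sq (y : V) := (co y 0 - (1 - mu)) ^+ 2 + co y 1 ^+ 2.
Definition r1 (y : V) := Num.sqrt (r1sq y).
Definition r2 (y : V) := Num.sqrt (r2sq y).
Definition dr1 (y v : V) := 2 * (co y 0 + mu) * co v 0 + 2 * co y 1 * co v 1.
Definition dr2 (y v : V) := 2 * (co y 0 - (1 - mu)) * co v 0 + 2 * co y 1 * co v 1.

Definition H3b' (y : V) := (co y 2 ^+ 2 + co y 3 ^+ 2) / 2 + (co y 0 * co y 3 - co y 1 * co y 2)
  - (1 - mu) / r1 y - mu / r2 y.

Lemma H3bE : H3b mu = H3b'.
Proof. by []. Qed.

Definition DH (y v : V) := co y 2 * co v 2 + co y 3 * co v 3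
  + (co v 0 * co y 3 + co y 0 * co v 3 - co v 1 * co y 2 - co y 1 * co v 2)
  + (1 - mu) * dr1 y v / (2 * r1 y ^+ 3) + mu * dr2 y v / (2 * r2 y ^+ 3).

Lemma isdr1 y v : 0 < r1sq y -> is_derive y v r1 (dr1 y v / (2 * r1 y)).
Proof. move=> H; rewrite /r1; apply: isdsqrt => //.
rewrite /r1sq; apply: is_derive_eq. dtac. rewrite /dr1; ring. Qed.
Lemma isdr2 y v : 0 < r2sq y -> is_derive y v r2 (dr2 y v / (2 * r2 y)).
Proof. move=> H; rewrite /r2; apply: isdsqrt => //.
rewrite /r2sq; apply: is_derive_eq. dtac. rewrite /dr2; ring. Qed.

Lemma dH y v : 0 < r1sq y -> 0 < r2sq y -> is_derive y v (H3b mu) (DH y v).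
Proof.
move=> h1 h2.
have n1 : r1 y != 0 by rewrite /r1 gt_eqF // sqrtr_gt0.
have n2 : r2 y != 0 by rewrite /r2 gt_eqF // sqrtr_gt0.
rewrite H3bE /H3b'.
apply: is_derive_eq.
  repeat first [ apply: isdC | apply: isdco | apply: isdX2 | apply: isdD
  | apply: isdB | apply: isdN | apply: isdM | (apply: isdV; [first [exact: n1 | exact: n2]|])
  | exact: isdr1 | exact: isdr2 ].
rewrite /DH. by field; rewrite n1 n2.
Qed.


Lemma sq2_pos (a b : R) : (a != 0) || (b != 0) -> 0 < a ^+ 2 + b ^+ 2.
Proof.
move=> H; have := sqr_ge0 a; have := sqr_ge0 b.
case/orP: H => h.
  have : 0 < a ^+ 2 by rewrite lt0r sqrf_eq0 h sqr_ge0.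
  lra.
have : 0 < b ^+ 2 by rewrite lt0r sqrf_eq0 h sqr_ge0.
lra.
Qed.

Lemma dom_r1 (x : V) : H3b_dom mu x -> 0 < r1sq x.
Proof.
case=> h _; apply: sq2_pos; move: h; apply: contraR.
rewrite negb_or !negbK => /andP[/eqP a /eqP b].
by rewrite xpair_eqE b eqxx andbT -[co x 0](addrK mu) a sub0r.
Qed.

Lemma dom_r2 (x : V) : H3b_dom mu x -> 0 < r2sq x.
Proof.
case=> _ h; apply: sq2_pos; move: h; apply: contraR.
rewrite negb_or !negbK => /andP[/eqP a /eqP b].
by rewrite xpair_eqE b eqxx andbT -[co x 0](subrK (1 - mu)) a add0r.
Qed.

Lemma crit_eqs (x : V) : H3b_crit mu x ->
  [/\ 0 < r1sq x, 0 < r2sq x & forall k : nat, (k < 4)%N -> DH x (e4 R (inord k)) = 0].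
Proof.
case=> hd [_ g0]; have h1 := dom_r1 hd; have h2 := dom_r2 hd.
split => // k hk.
have := congr1 (fun M : 'cV[R]_4 => M (inord k) 0) g0.
rewrite /grad !mxE /pd => <-.
by symmetry; apply: derive_val; apply: dH.
Qed.

End H.


Section B.
Variable R : realType.

Lemma sq_lt_bound (x y : R) : 0 <= y -> x ^+ 2 < y ^+ 2 -> -y < x < y.
Proof. move=> y0 h; apply/andP; split; nra. Qed.

Lemma sq_le_bound (x y : R) : 0 <= y -> x ^+ 2 <= y ^+ 2 -> x <= y.
Proof. move=> y0 h; nra. Qed.

Lemma halfb (m1 m2 X1 X2 Y R1 R2 a b : R) : 0 <= m1 -> 0 <= m2 -> m1 + m2 = 1 ->
  0 < R1 -> 0 < R2 -> 0 < a -> 0 < b -> a * R1 = 1 -> b * R2 = 1 ->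
  (X1 - X2) ^+ 2 = 1 -> R1 ^+ 2 = X1 ^+ 2 + Y ^+ 2 -> R2 ^+ 2 = X2 ^+ 2 + Y ^+ 2 ->
  ((m1 * a ^+ 3 - m1) * R1) ^+ 2 = ((m2 * b ^+ 3 - m2) * R2) ^+ 2 ->
  m1 * a ^+ 2 <= 6.
Proof.
move=> m10 m20 msum R10 R20 a0 b0 aR bR dX eR1 eR2 eN.
have [R1h|R1l] := leP (1/2 : R) R1.
  have : a <= 2 by nra.
  move=> a2; have : a ^+ 2 <= 4 by nra.
  nra.
set d := X1 - X2.
have X2e : X2 = X1 - d by rewrite /d; ring.
have Y0 := sqr_ge0 Y.
have X1s : X1 ^+ 2 < 1/4 by nra.
have dX1 : (d * X1) ^+ 2 < (1/2) ^+ 2 by rewrite exprMn dX; lra.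
have h12 : (0:R) <= 1/2 by lra.
have dX1b := sq_lt_bound h12 dX1.
case/andP: dX1b => dl du.
have R2s : R2 ^+ 2 < 9/4.
  rewrite eR2 X2e; have : X1 ^+ 2 + Y ^+ 2 < 1/4 by rewrite -eR1; nra.
  have E : (X1 - d) ^+ 2 + Y ^+ 2 = X1 ^+ 2 + Y ^+ 2 - 2 * (d * X1) + d ^+ 2 by ring.
  rewrite E dX; lra.
have R2l : R2 < 3/2 by nra.
have R2g : 1/4 < R2 ^+ 2.
  rewrite eR2 X2e.
  have E : (X1 - d) ^+ 2 + Y ^+ 2 = X1 ^+ 2 + Y ^+ 2 - 2 * (d * X1) + d ^+ 2 by ring.
  have tX : X1 ^+ 2 = (d * X1) ^+ 2 by rewrite exprMn dX mul1r.
  rewrite E dX tX.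
  have : 1/2 < 1 - d * X1 by lra.
  nra.
have R2h : 1/2 < R2 by nra.
have b2 : b < 2 by nra.
have T : (m1 * a ^+ 3 - m1) * R1 = m1 * a ^+ 2 - m1 * R1.
  have E : a ^+ 3 * R1 = a ^+ 2 * (a * R1) by ring.
  by rewrite mulrBl -mulrA E aR mulr1.
have S : (m2 * b ^+ 3 - m2) * R2 = m2 * b ^+ 2 - m2 * R2.
  have E : b ^+ 3 * R2 = b ^+ 2 * (b * R2) by ring.
  by rewrite mulrBl -mulrA E bR mulr1.
rewrite T S in eN.
have b4 : b ^+ 2 <= 4 by nra.
have Su : m2 * b ^+ 2 - m2 * R2 <= 4 * m2 by nra.
have Sl : - (4 * m2) <= m2 * b ^+ 2 - m2 * R2 by nra.
have S2 : (m2 * b ^+ 2 - m2 * R2) ^+ 2 <= (4 * m2) ^+ 2 by nra.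
have T2 : (m1 * a ^+ 2 - m1 * R1) ^+ 2 <= (4 * m2) ^+ 2 by rewrite eN.
have Tb := sq_le_bound (mulr_ge0 (ler0n _ 4) m20) T2.
nra.
Qed.

Lemma crit_bound (m q1 Y p1 p2 R1 R2 : R) :
  0 <= m -> m <= 1 -> 0 < R1 -> 0 < R2 ->
  R1 ^+ 2 = (q1 + m) ^+ 2 + Y ^+ 2 -> R2 ^+ 2 = (q1 - (1 - m)) ^+ 2 + Y ^+ 2 ->
  p2 + (1 - m) * (q1 + m) / R1 ^+ 3 + m * (q1 - (1 - m)) / R2 ^+ 3 = 0 ->
  - p1 + (1 - m) * Y / R1 ^+ 3 + m * Y / R2 ^+ 3 = 0 ->
  p1 - Y = 0 -> p2 + q1 = 0 ->
  -100 <= (p1 ^+ 2 + p2 ^+ 2) / 2 + (q1 * p2 - Y * p1) - (1 - m) / R1 - m / R2.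
Proof.
move=> m0 m1 R10 R20 eR1 eR2 E0 E1 E2 E3.
set a := R1^-1; set b := R2^-1.
have a0 : 0 < a by rewrite invr_gt0.
have b0 : 0 < b by rewrite invr_gt0.
have aR : a * R1 = 1 by rewrite mulVf // gt_eqF.
have bR : b * R2 = 1 by rewrite mulVf // gt_eqF.
have ia : (R1 ^+ 3)^-1 = a ^+ 3 by rewrite exprVn.
have ib : (R2 ^+ 3)^-1 = b ^+ 3 by rewrite exprVn.
rewrite ia ib in E0 E1.
set X1 := q1 + m in eR1 E0; set X2 := q1 - (1 - m) in eR2 E0.
set al := (1 - m) * a ^+ 3; set be := m * b ^+ 3.
have G1 : al * X1 + be * X2 = q1.
  have : p2 = - q1 by lra.
  move=> p2e; rewrite p2e in E0; rewrite /al /be; lra.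
have G2 : al * Y + be * Y = Y.
  have : p1 = Y by lra.
  move=> p1e; rewrite p1e in E1; rewrite /al /be; lra.
have qX : q1 = (1 - m) * X1 + m * X2 by rewrite /X1 /X2; ring.
have N1 : (al - (1 - m)) * X1 = - ((be - m) * X2).
  have : al * X1 + be * X2 = (1 - m) * X1 + m * X2 by rewrite G1 -qX.
  lra.
have N2 : (al - (1 - m)) * Y = - ((be - m) * Y).
  have : al * Y + be * Y = (1 - m) * Y + m * Y by rewrite G2; ring.
  lra.
have N : ((al - (1 - m)) * R1) ^+ 2 = ((be - m) * R2) ^+ 2.
  rewrite !exprMn eR1 eR2.
  have -> : (al - (1 - m)) ^+ 2 * (X1 ^+ 2 + Y ^+ 2) =
     ((al - (1 - m)) * X1) ^+ 2 + ((al - (1 - m)) * Y) ^+ 2 by ring.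
  rewrite N1 N2; ring.
have dX : (X1 - X2) ^+ 2 = 1 by rewrite /X1 /X2; ring.
have dX' : (X2 - X1) ^+ 2 = 1 by rewrite /X1 /X2; ring.
have P6 : (1 - m) * a ^+ 2 <= 6.
  apply: (halfb (m2 := m) (X1 := X1) (X2 := X2) (Y := Y) (R1 := R1) (R2 := R2) (b := b))
    => //; try lra.
have Q6 : m * b ^+ 2 <= 6.
  apply: (halfb (m2 := 1 - m) (X1 := X2) (X2 := X1) (Y := Y) (R1 := R2) (R2 := R1) (b := a))
    => //; try lra.
have CS : X1 * X2 + Y ^+ 2 <= R1 * R2.
  apply: sq_le_bound; first by apply: mulr_ge0; exact: ltW.
  rewrite exprMn eR1 eR2.
  have -> : (X1 ^+ 2 + Y ^+ 2) * (X2 ^+ 2 + Y ^+ 2) = (X1 * X2 + Y ^+ 2) ^+ 2 + Y ^+ 2 * (X1 - X2) ^+ 2 by ring.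
  have := sqr_ge0 Y; rewrite dX; lra.
have alR : al * R1 = (1 - m) * a ^+ 2.
  by rewrite /al exprSr -!mulrA aR mulr1.
have beR : be * R2 = m * b ^+ 2.
  by rewrite /be exprSr -!mulrA bR mulr1.
have al0 : 0 <= al by rewrite /al; apply: mulr_ge0; [lra | apply: exprn_ge0; exact: ltW].
have be0 : 0 <= be by rewrite /be; apply: mulr_ge0; [lra | apply: exprn_ge0; exact: ltW].
have Qn : q1 ^+ 2 + Y ^+ 2 <= (al * R1 + be * R2) ^+ 2.
  have -> : q1 ^+ 2 + Y ^+ 2 = (al * X1 + be * X2) ^+ 2 + (al * Y + be * Y) ^+ 2 by rewrite G1 G2.
  have -> : (al * X1 + be * X2) ^+ 2 + (al * Y + be * Y) ^+ 2 =
    al ^+ 2 * (X1 ^+ 2 + Y ^+ 2) + 2 * (al * be) * (X1 * X2 + Y ^+ 2) + be ^+ 2 * (X2 ^+ 2 + Y ^+ 2) by ring.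
  rewrite -eR1 -eR2.
  have := mulr_ge0 al0 be0.
  move=> h; have := ler_wpM2l h CS; nra.
rewrite alR beR in Qn.
have P0 : 0 <= (1 - m) * a ^+ 2 by apply: mulr_ge0; [lra | exact: sqr_ge0].
have Q0 : 0 <= m * b ^+ 2 by apply: mulr_ge0; [lra | exact: sqr_ge0].
have Qn2 : q1 ^+ 2 + Y ^+ 2 <= 144 by nra.
have Pa : (1 - m) * a <= 6.
  have [a1|a1] := leP a 1; first nra.
  have : a <= a ^+ 2 by nra.
  nra.
have Qb : m * b <= 6.
  have [b1|b1] := leP b 1; first nra.
  have : b <= b ^+ 2 by nra.
  nra.
have p1e : p1 = Y by lra.
have p2e : p2 = - q1 by lra.
rewrite p1e p2e.
nra.
Qed.
End B.


Section L.
Variable R : realType.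
Local Notation V := 'cV[R]_4.

Lemma crit_lb (mu : R) (x : V) : 0 <= mu -> mu <= 1 -> H3b_crit mu x -> -100 <= H3b mu x.
Proof.
move=> m0 m1 hc; have [h1 h2 hk] := crit_eqs hc.
have R10 : 0 < r1 mu x by rewrite /r1 sqrtr_gt0.
have R20 : 0 < r2 mu x by rewrite /r2 sqrtr_gt0.
have n1 : r1 mu x != 0 by rewrite gt_eqF.
have n2 : r2 mu x != 0 by rewrite gt_eqF.
have e1 : r1 mu x ^+ 2 = (co x 0 + mu) ^+ 2 + co x 1 ^+ 2 by rewrite /r1 sqr_sqrtr // ltW.
have e2 : r2 mu x ^+ 2 = (co x 0 - (1 - mu)) ^+ 2 + co x 1 ^+ 2 by rewrite /r2 sqr_sqrtr // ltW.
have := hk 0%N erefl; have := hk 1%N erefl; have := hk 2%N erefl; have := hk 3%N erefl.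
rewrite /DH /dr1 /dr2 !co_e4 //= => E3 E2 E1 E0.
rewrite H3bE /H3b'.
apply: (crit_bound m0 m1 R10 R20 e1 e2).
- rewrite -E0; field; by rewrite n1 n2.
- rewrite -E1; field; by rewrite n1 n2.
- rewrite -E2; ring.
- rewrite -E3; ring.
Qed.

End L.

Section L4.
Variable R : realType.
Local Notation V := 'cV[R]_4.
Variable mu : R.

Definition x4 : V := \col_(k < 4) nth 0 [:: 1/2 - mu; Num.sqrt 3 / 2; Num.sqrt 3 / 2; mu - 1/2] k.

Lemma co_x4 k : (k < 4)%N -> co x4 k = nth 0 [:: 1/2 - mu; Num.sqrt 3 / 2; Num.sqrt 3 / 2; mu - 1/2] k.
Proof. by move=> hk; rewrite /co /x4 mxE inordK. Qed.

Let s3 : Num.sqrt (3 : R) ^+ 2 = 3.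
Proof. by rewrite sqr_sqrtr // ler0n. Qed.
Let s3p : 0 < Num.sqrt (3 : R).
Proof. by rewrite sqrtr_gt0 ltr0n. Qed.

Lemma r1sq_x4 : r1sq mu x4 = 1.
Proof. rewrite /r1sq !co_x4 //=. have := s3. lra. Qed.
Lemma r2sq_x4 : r2sq mu x4 = 1.
Proof. rewrite /r2sq !co_x4 //=. have := s3. lra. Qed.
Lemma r1_x4 : r1 mu x4 = 1.
Proof. by rewrite /r1 r1sq_x4 sqrtr1. Qed.
Lemma r2_x4 : r2 mu x4 = 1.
Proof. by rewrite /r2 r2sq_x4 sqrtr1. Qed.

Lemma dfr1 (y : V) : 0 < r1sq mu y -> differentiable (r1 mu) y.
Proof.
move=> h; rewrite /r1; apply: dfsqrt => //.
rewrite /r1sq; repeat first [apply: dfC|apply: dfco|apply: dfX2|apply: dfD|apply: dfB|apply: dfN|apply: dfM].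
Qed.
Lemma dfr2 (y : V) : 0 < r2sq mu y -> differentiable (r2 mu) y.
Proof.
move=> h; rewrite /r2; apply: dfsqrt => //.
rewrite /r2sq; repeat first [apply: dfC|apply: dfco|apply: dfX2|apply: dfD|apply: dfB|apply: dfN|apply: dfM].
Qed.

Lemma x4_crit : H3b_crit mu x4.
Proof.
have h1 : 0 < r1sq mu x4 by rewrite r1sq_x4.
have h2 : 0 < r2sq mu x4 by rewrite r2sq_x4.
split; [|split].
- split; rewrite xpair_eqE negb_and; apply/orP; right; rewrite co_x4 //= mulf_neq0 ?gt_eqF //;
  by rewrite invr_gt0.
- rewrite H3bE /H3b'.
  have n1 : r1 mu x4 != 0 by rewrite r1_x4 oner_eq0.
  have n2 : r2 mu x4 != 0 by rewrite r2_x4 oner_eq0.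
  repeat first [apply: dfC|apply: dfco|apply: dfX2|apply: dfD|apply: dfB|apply: dfN|apply: dfM
    | (apply: dfV; [first [exact: n1|exact: n2]|]) | exact: dfr1 | exact: dfr2].
- apply/matrixP => k j; rewrite !mxE /pd.
  rewrite (@derive_val _ _ _ _ _ _ _ (dH _ h1 h2)).
  have -> : k = inord (val k) by apply: val_inj; rewrite /= inordK.
  rewrite /DH /dr1 /dr2 r1_x4 r2_x4 !co_x4 //.
  case: k => [[|[|[|[|]]]] Hk] //=; rewrite !co_e4 //=; have := s3; lra.
Qed.

Lemma x4_val : H3b mu x4 = - (3 / 2) + (mu - mu ^+ 2) / 2.
Proof.
rewrite H3bE /H3b' r1_x4 r2_x4 !co_x4 //=; have := s3; lra.
Qed.

Lemma HL1_bound : 0 <= mu -> mu < 1 -> HL1 mu <= - (3 / 2) + (mu - mu ^+ 2) / 2.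
Proof.
move=> m0 m1; rewrite -x4_val /HL1.
apply: ge_inf; last by exists x4 => //; exact: x4_crit.
exists (-100) => y [x hx <-]; apply: crit_lb => //; exact: ltW.
Qed.

End L4.




Lemma cV3_nz (R : realType) (u : 'cV[R]_3) : u != 0 ->
  (u (inord 0) 0 != 0) || (u (inord 1) 0 != 0) || (u (inord 2) 0 != 0).
Proof.
apply: contraR; rewrite !negb_or !negbK => /andP[/andP[/eqP a /eqP b] /eqP d].
apply/eqP/matrixP => i j; rewrite (ord1 j) !mxE.
have -> : i = inord (val i) by apply: val_inj; rewrite /= inordK.
by case: i => [[|[|[|]]] Hi] //=.
Qed.

Theorem lemma4p3 (R : realType) (mu c : R) :
  0 <= mu -> mu < 1 -> - HL1 mu <= c ->
  forall x : 'cV[R]_4, Sigma mu c x -> co x 0 = 0 -> co x 1 = 0 ->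
  posdef (THess mu c x).
Proof.
move=> mu0 mu1 hc x [y _ cc] h0 h1.
have [_ K0] := connected_component_sub cc.
have s1 : co x 2 ^+ 2 + co x 3 ^+ 2 = 1 - mu.
  move: K0; rewrite KLCE /KLC' (Sf0 h0 h1) (mf0 h0 h1) h0 h1 => K0.
  have : (co x 2 ^+ 2 + co x 3 ^+ 2) / 2 - (1 - mu) / 2 = 0.
    by rewrite -K0; ring.
  move=> E; lra.
have hb := HL1_bound mu0 mu1.
have Ap : 0 < 2 * (c - mu) - mu ^+ 2.
  have : 0 <= mu ^+ 2 by exact: sqr_ge0.
  rewrite expr2 in hb *; lra.
move=> u un0.
rewrite THess_form //.
apply: key; first by rewrite s1 subr_gt0.
  exact: Ap.
exact: cV3_nz.
Qed.
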